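(* In the setting of the context, for $1\le i\le 2n$ let $A_1(i,c)$ be the area of the polygon with vertices $P_i,P_{i+1},\dots,P_{i+n}$ and let $L_V(i,c)=\sum_{j=i}^{i+n-1}\lambda_{j+\frac12}$ be the $V$-length of the polygonal arc $P_i,P_{i+1},\dots,P_{i+n}$. Then $A_1(i,c)-c\,L_V(i,c)$ is independent of $i$.
   Context: $[x,y]$ denotes the determinant of the matrix with columns $x,y\in\mathbb{R}^2$. Fix $n\ge2$; indices (integer and half-integer) are read modulo $2n$. $U$ is a convex $2n$-gon with distinct vertices $U_1,\dots,U_{2n}$ in counterclockwise order with $U_{i+n}=-U_i$, and $V_{i+\frac12}=(U_{i+1}-U_i)/[U_i,U_{i+1}]$. Let $c>0$ and let $P$ be a convex polygon with nonempty interior and vertex list $P_1,\dots,P_{2n}$ (listed counterclockwise, consecutive entries may coincide) with $P_{i+1}-P_i=\lambda_{i+\frac12}V_{i+\frac12}$, $\lambda_{i+\frac12}\ge0$, and $P_i-P_{i+n}=2cU_i$ for all $i$. *)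

(* Defs.v *)
From HB Require Import structures.
From mathcomp Require Import all_boot all_order all_algebra.
Set Implicit Arguments. Unset Strict Implicit. Unset Printing Implicit Defensive.
Import Order.TTheory GRing.Theory Num.Theory.
Local Open Scope ring_scope.

Section Defs.
Variable R : realFieldType.
Definition pt := (R * R)%type.

Definition det2 (x y : pt) : R := x.1 * y.2 - x.2 * y.1.

Definition padd (x y : pt) : pt := (x.1 + y.1, x.2 + y.2).
Definition psub (x y : pt) : pt := (x.1 - y.1, x.2 - y.2).
Definition popp (x : pt) : pt := (- x.1, - x.2).
Definition pscale (a : R) (x : pt) : pt := (a * x.1, a * x.2).

Definition shoelace (s : seq pt) : R :=
  \sum_(k < size s) det2 (nth (0, 0) s k) (nth (0, 0) s ((k + 1) %% size s)).
Definition poly_area (s : seq pt) : R := `| shoelace s | / 2.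

(* V_{i+1/2} = (U_{i+1} - U_i) / [U_i, U_{i+1}]  (stored at index i) *)
Definition Vdir (U : nat -> pt) (i : nat) : pt :=
  pscale (det2 (U i) (U i.+1))^-1 (psub (U i.+1) (U i)).

Definition A1 (n : nat) (P : nat -> pt) (i : nat) : R :=
  poly_area [seq P j | j <- iota i n.+1].

(* L_V(i, c) = sum_{j=i}^{i+n-1} lambda_{j+1/2} (lambda_{j+1/2} stored at index j) *)
Definition LV (n : nat) (lam : nat -> R) (i : nat) : R :=
  \sum_(i <= j < i + n) lam j.
End Defs.

(* Main.v *)
Require Import Defs.
From HB Require Import structures.
From mathcomp Require Import all_boot all_order all_algebra ring lra zify.
Import Order.TTheory GRing.Theory Num.Theory.
Local Open Scope ring_scope.

Lemma shoelace_form (R : realFieldType) (P : nat -> pt R) i m :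
 shoelace [seq P j | j <- iota i m.+1] =
   \sum_(k < m) det2 (P (i+k)%N) (P (i+k).+1) + det2 (P (i+m)%N) (P i).
Proof.
rewrite /shoelace size_map size_iota big_ord_recr.
have hn : forall k, (k < m.+1)%N -> nth (0,0) [seq P j | j <- iota i m.+1] k = P (i + k)%N.
  by move=> k hk; rewrite (nth_map 0%N) ?size_iota // nth_iota.
congr (_ + _).
  apply: eq_bigr => k _; have hk := ltn_ord k.
  rewrite modn_small; last by rewrite addn1 ltnS.
  rewrite !hn ?addn1 ?addnS //. all: try by rewrite ltnS ?ltnW.
by rewrite /= addn1 modnn !hn // addn0.
Qed.

Lemma alg0 (R : realFieldType) (x1 x2 y1 y2 u1 u2 w1 w2 p1 p2 z1 z2 lam lam' c : R) :
  let d := u1 * w2 - u2 * w1 in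
  d != 0 ->
  y1 - x1 = lam * d^-1 * (w1 - u1) ->
  y2 - x2 = lam * d^-1 * (w2 - u2) ->
  x1 - p1 = 2 * c * u1 -> x2 - p2 = 2 * c * u2 ->
  y1 - z1 = 2 * c * w1 -> y2 - z2 = 2 * c * w2 ->
  z1 - p1 = lam' * ((- u1) * (- w2) - (- u2) * (- w1))^-1 * (- w1 - - u1) ->
  z2 - p2 = lam' * ((- u1) * (- w2) - (- u2) * (- w1))^-1 * (- w2 - - u2) ->
  ((p1 * z2 - p2 * z1) - (x1 * y2 - x2 * y1) + (z1 * y2 - z2 * y1) - (p1 * x2 - p2 * x1)) / 2
   = c * (lam' - lam).
Proof.
move=> d hd hy1 hy2 hp1 hp2 hz1 hz2 hn1 hn2.
have ed : (- u1) * (- w2) - (- u2) * (- w1) = d by rewrite /d; ring.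
rewrite ed in hn1 hn2.
have ey1 : y1 = x1 + lam * d^-1 * (w1 - u1) by rewrite -hy1; ring.
have ey2 : y2 = x2 + lam * d^-1 * (w2 - u2) by rewrite -hy2; ring.
have ep1 : p1 = x1 - 2 * c * u1 by rewrite -hp1; ring.
have ep2 : p2 = x2 - 2 * c * u2 by rewrite -hp2; ring.
have ez1 : z1 = y1 - 2 * c * w1 by rewrite -hz1; ring.
have ez2 : z2 = y2 - 2 * c * w2 by rewrite -hz2; ring.
rewrite ez1 ez2 ep1 ep2 ey1 ey2 in hn1 hn2 *.
have E : (lam + lam' - 2 * c * d) * d^-1 * ((w1 - u1) * u2 - (w2 - u2) * u1) = 0.
  have -> : (lam + lam' - 2 * c * d) * d^-1 * ((w1 - u1) * u2 - (w2 - u2) * u1) =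
    u2 * ((lam + lam') * d^-1 * (w1 - u1) - 2 * c * (d * d^-1) * (w1 - u1))
    - u1 * ((lam + lam') * d^-1 * (w2 - u2) - 2 * c * (d * d^-1) * (w2 - u2)) by ring.
  rewrite divff //.
  have e1 : (lam + lam') * d^-1 * (w1 - u1) - 2 * c * 1 * (w1 - u1) = 0.
    by move/eqP: hn1; rewrite -subr_eq0 => /eqP h1; rewrite -[RHS]h1; ring.
  have e2 : (lam + lam') * d^-1 * (w2 - u2) - 2 * c * 1 * (w2 - u2) = 0.
    by move/eqP: hn2; rewrite -subr_eq0 => /eqP h1; rewrite -[RHS]h1; ring.
  by rewrite e1 e2; ring.
have : (w1 - u1) * u2 - (w2 - u2) * u1 = - d by rewrite /d; ring.
move=> ew; rewrite ew in E.
have E' : lam + lam' - 2 * c * d = - ((lam + lam' - 2 * c * d) * d^-1 * - d) by field.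
rewrite E oppr0 in E'.
have el : lam' = 2 * c * d - lam by apply/eqP; rewrite -subr_eq0 -E' -[_ == _]/(_ == _); apply/eqP; ring.
rewrite el /d. field. by [].
Qed.

Lemma alg (R : realFieldType) (x y u w p z : pt R) lam lam' c :
  det2 u w != 0 ->
  psub y x = pscale lam (pscale (det2 u w)^-1 (psub w u)) ->
  psub x p = pscale (2*c) u -> psub y z = pscale (2*c) w ->
  psub z p = pscale lam' (pscale (det2 (popp u) (popp w))^-1 (psub (popp w) (popp u))) ->
  (det2 p z - det2 x y + det2 z y - det2 p x)/2 = c*(lam'-lam).
Proof.
case: x => x1 x2; case: y => y1 y2; case: u => u1 u2; case: w => w1 w2;
case: p => p1 p2; case: z => z1 z2.
rewrite /det2 /psub /pscale /popp /= => hd [hy1 hy2] [hp1 hp2] [hz1 hz2] [hn1 hn2].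
rewrite !mulrA in hy1 hy2 hn1 hn2.
exact: (@alg0 R x1 x2 y1 y2 u1 u2 w1 w2 p1 p2 z1 z2 lam lam' c hd hy1 hy2 hp1 hp2 hz1 hz2 hn1 hn2).
Qed.

Lemma tri (R : realFieldType) (P : nat -> pt R) i p m :
  \sum_(k < m) det2 (psub (P (i+k)%N) p) (psub (P (i+k).+1) p) =
  \sum_(k < m) det2 (P (i+k)%N) (P (i+k).+1) + det2 p (P i) - det2 p (P (i+m)%N).
Proof.
elim: m => [|m IH]; first by rewrite !big_ord0 addn0 add0r subrr.
rewrite !big_ord_recr /= IH addnS /det2 /psub /=; ring.
Qed.

Lemma tele (R : realFieldType) (P : nat -> pt R) i m :
  \sum_(k < m) det2 (P (i.+1+k)%N) (P (i.+1+k).+1) =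
  \sum_(k < m) det2 (P (i+k)%N) (P (i+k).+1) + det2 (P (i+m)%N) (P (i+m).+1) - det2 (P i) (P i.+1).
Proof.
have e1 : \sum_(k < m.+1) det2 (P (i+k)%N) (P (i+k).+1) =
   \sum_(k < m) det2 (P (i+k)%N) (P (i+k).+1) + det2 (P (i+m)%N) (P (i+m).+1)
   by rewrite big_ord_recr.
have e2 : \sum_(k < m.+1) det2 (P (i+k)%N) (P (i+k).+1) =
   det2 (P i) (P i.+1) + \sum_(k < m) det2 (P (i.+1+k)%N) (P (i.+1+k).+1).
  rewrite big_ord_recl /= addn0; congr (_ + _); apply: eq_bigr => k _.
  by rewrite /bump /= add1n addSnnS.
by rewrite -e1 e2 addrAC subrr add0r.
Qed.

Lemma poppK (R : realFieldType) (x : pt R) : popp (popp x) = x.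
Proof. by case: x => a b; rewrite /popp /= !opprK. Qed.

Theorem corollary3p5 (R : realFieldType) (n : nat) (U P : nat -> pt R)
    (lam : nat -> R) (c : R) :
  (2 <= n)%N ->
  (* indices are read modulo 2n *)
  (forall i, U (i + 2 * n)%N = U i) ->
  (forall i, P (i + 2 * n)%N = P i) ->
  (forall i, lam (i + 2 * n)%N = lam i) ->
  (* U is a convex 2n-gon with distinct vertices in counterclockwise order:
     every other vertex lies strictly to the left of each directed edge *)
  (forall i k, (i < 2 * n)%N -> (k < 2 * n)%N -> k != i -> k != (i.+1 %% (2 * n))%N ->
     0 < det2 (psub (U i.+1) (U i)) (psub (U k) (U i))) ->
  (* central symmetry *)
  (forall i, U (i + n)%N = popp (U i)) ->
  0 < c ->
  (* P is convex: all vertices weakly to the left of each edge line *)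
  (forall i k, 0 <= det2 (psub (P i.+1) (P i)) (psub (P k) (P i))) ->
  (* P has nonempty interior *)
  (exists i j k, det2 (psub (P j) (P i)) (psub (P k) (P i)) != 0) ->
  (forall i, psub (P i.+1) (P i) = pscale (lam i) (Vdir U i)) ->
  (forall i, 0 <= lam i) ->
  (forall i, psub (P i) (P (i + n)%N) = pscale (2 * c) (U i)) ->
  forall i j, (i < 2 * n)%N -> (j < 2 * n)%N ->
    A1 n P i - c * LV n lam i = A1 n P j - c * LV n lam j.
Proof.
move=> hn hU hP hlam hconvU hsym hc hconvP _ hedge hlam0 hdiag i j _ _.
have n2 : (0 < 2 * n)%N by lia.
have Uper : forall k, U k = U (k %% (2*n))%N.
  move=> k; rewrite {1}(divn_eq k (2*n)); elim: (k %/ (2*n))%N => [|q IH].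
    by rewrite mul0n add0n.
  by rewrite mulSnr addnAC hU.
have dpos : forall k, 0 < det2 (U k) (U k.+1).
  move=> k; set r := (k %% (2*n))%N.
  have hr : (r < 2 * n)%N by rewrite ltn_pmod.
  have e1 : U k = U r := Uper k.
  have e2 : U k.+1 = U r.+1.
    by rewrite (Uper k.+1) (Uper r.+1) -addn1 -(addn1 r) modnDml.
  have hm : ((r.+1 < 2 * n) /\ r.+1 %% (2*n) = r.+1 \/ r.+1 = 2 * n /\ r.+1 %% (2*n) = 0)%N.
    case: (ltnP r.+1 (2*n)) => h; first by left; rewrite modn_small.
    right; split; first by clear -h hr; lia. have -> : r.+1 = (2 * n)%N by lia.
    by rewrite modnn.
  clearbody r.
  have [kk [hk1 hk2 hk3 hk4]] : exists kk, [/\ (kk < 2 * n)%N, kk != r,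
       kk != (r.+1 %% (2 * n))%N & U kk = popp (U r)].
    case: (ltnP r n) => hrn.
      by exists (r + n)%N; split; [clear -hn hrn; lia | clear -hn hrn; lia | case: hm => [[? ->]|[? ->]]; clear -hn hrn hr; lia | exact: hsym].
    exists (r - n)%N; split; [clear -hn hrn hr; lia | clear -hn hrn hr; lia | case: hm => [[h ->]|[h ->]]; clear -hn hrn hr h; lia |].
    by rewrite -{2}(subnK hrn) hsym poppK.
  have := hconvU r kk hr hk1 hk2 hk3.
  rewrite e1 e2 hk4.
  move: (U r) (U r.+1) => [u1 u2] [w1 w2]; rewrite /det2 /psub /popp /=.
  have -> : (w1 - u1) * (- u2 - u2) - (w2 - u2) * (- u1 - u1) = 2 * (u1 * w2 - u2 * w1) by ring.
  by rewrite pmulr_rgt0.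
pose S k := shoelace [seq P j | j <- iota k n.+1].
have Snn : forall k, 0 <= S k.
  move=> k; rewrite /S shoelace_form.
  have := tri _ P k (P k) n.
  have -> : det2 (P k) (P k) = 0 by rewrite /det2 mulrC subrr.
  have -> : det2 (P (k + n)%N) (P k) = - det2 (P k) (P (k + n)%N) by rewrite /det2; ring.
  rewrite addr0 -!/(_ - _) => <-.
  apply: sumr_ge0 => l _.
  have := hconvP (k + l)%N k.
  have -> : det2 (psub (P (k + l)%N) (P k)) (psub (P (k + l).+1) (P k)) =
    det2 (psub (P (k + l).+1) (P (k + l)%N)) (psub (P k) (P (k + l)%N)) by rewrite /det2 /psub /=; ring.
  by [].
have A1S : forall k, A1 n P k = S k / 2.
  by move=> k; rewrite /A1 /poly_area ger0_norm //; exact: Snn.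
have LVr : forall k, LV n lam k.+1 = LV n lam k + lam (k + n)%N - lam k.
  move=> k; apply/eqP; rewrite eq_sym subr_eq addrC; apply/eqP.
  rewrite /LV addrC addSn (addrC _ (lam k)) -big_ltn ?ltnS ?leq_addr //.
  by rewrite big_nat_recr //= leq_addr.
have step : forall k, S k.+1 / 2 - c * LV n lam k.+1 = S k / 2 - c * LV n lam k.
  move=> k.
  have hd : det2 (U k) (U k.+1) != 0 by rewrite gt_eqF ?dpos.
  have hz : psub (P k.+1) (P (k + n).+1) = pscale (2 * c) (U k.+1) by rewrite -addSn hdiag.
  have hn' : psub (P (k + n).+1) (P (k + n)%N) = pscale (lam (k + n)%N)
     (pscale (det2 (popp (U k)) (popp (U k.+1)))^-1 (psub (popp (U k.+1)) (popp (U k)))).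
    by rewrite hedge /Vdir -addSn !hsym.
  have key := alg _ _ _ _ _ _ _ _ _ _ hd (hedge k) (hdiag k) hz hn'.
  rewrite /S !shoelace_form tele LVr addSn.
  move: key; set a := det2 _ _; set b := det2 _ _; set d := det2 _ _; set e := det2 _ _.
  move=> key. lra.
have all0 : forall k, S k / 2 - c * LV n lam k = S 0 / 2 - c * LV n lam 0.
  by elim=> [|k IH] //; rewrite step.
by rewrite !A1S !all0.
Qed.
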